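(* Let $G_{ij}$ ($0\le i\le m$, $0\le j\le n$) be an $m\times n$ net in the plane $\mathbb R^2$, let $0\le i_0\le m$, $0\le j_0\le n$, and let points $F_{ij_0}\in I^3$ ($0\le i\le m$) and $F_{i_0j}\in I^3$ ($0\le j\le n$) be given with top views $\overline{F_{ij_0}}=G_{ij_0}$ and $\overline{F_{i_0j}}=G_{i_0j}$. Then there exists a unique $m\times n$ net $F_{ij}$ ($0\le i\le m$, $0\le j\le n$) in $I^3$ having these two parameter lines and top view $\overline{F_{ij}}=G_{ij}$ for all $i,j$.
   Context: $I^3$ is $\mathbb{R}^3$ with coordinates $(x,y,z)$; the top view of $(x,y,z)$ is $(x,y)$. An $m\times n$ net (in $\mathbb R^3$ or $\mathbb R^2$) is a collection of points $F_{ij}$, $0\le i\le m,0\le j\le n$, such that $F_{ij},F_{i+1,j},F_{i+1,j+1},F_{i,j+1}$ are consecutive vertices of a convex planar quadrilateral for all $0\le i<m,0\le j<n$. Its parameter lines are the broken lines $F_{i0}\dots F_{in}$ and $F_{0j}\dots F_{mj}$; the data above are the parameter lines $F_{0j_0}\dots F_{mj_0}$ and $F_{i_00}\dots F_{i_0n}$. *)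

(* Defs.v *)
From HB Require Import structures.
From mathcomp Require Import all_boot all_order all_algebra.
Set Implicit Arguments. Unset Strict Implicit. Unset Printing Implicit Defensive.
Import Order.TTheory GRing.Theory Num.Theory.
Local Open Scope ring_scope.

(* Points of R^2 are pairs (x,y); points of I^3 = R^3 are triples ((x,y),z). *)
Definition pt2 (R : realFieldType) := (R * R)%type.
Definition pt3 (R : realFieldType) := (R * R * R)%type.

Section Geo.
Variable R : realFieldType.

Definition top (p : pt3 R) : pt2 R := (p.1.1, p.1.2).

Definition orient2 (a b c : pt2 R) : R :=
  (b.1 - a.1) * (c.2 - a.2) - (b.2 - a.2) * (c.1 - a.1).

(* a, b, c, d are consecutive vertices of a convex quadrilateral in R^2:
   every consecutive triple turns strictly in the same direction *)
Definition convex_quad2 (a b c d : pt2 R) : Prop :=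
  (0 < orient2 a b c /\ 0 < orient2 b c d /\ 0 < orient2 c d a /\ 0 < orient2 d a b)
  \/
  (orient2 a b c < 0 /\ orient2 b c d < 0 /\ orient2 c d a < 0 /\ orient2 d a b < 0).

Definition sub3 (p q : pt3 R) : pt3 R := (p.1.1 - q.1.1, p.1.2 - q.1.2, p.2 - q.2).
Definition cross3 (u v : pt3 R) : pt3 R :=
  (u.1.2 * v.2 - u.2 * v.1.2, u.2 * v.1.1 - u.1.1 * v.2, u.1.1 * v.1.2 - u.1.2 * v.1.1).
Definition dot3 (u v : pt3 R) : R := u.1.1 * v.1.1 + u.1.2 * v.1.2 + u.2 * v.2.

Definition turn3 (a b c : pt3 R) : pt3 R := cross3 (sub3 b a) (sub3 c b).

(* a, b, c, d are consecutive vertices of a convex planar quadrilateral in R^3: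
   the four points are coplanar and the four turning vectors (all normal to the
   plane) point strictly in the same direction *)
Definition convex_planar_quad3 (a b c d : pt3 R) : Prop :=
  dot3 (cross3 (sub3 b a) (sub3 c a)) (sub3 d a) = 0 /\
  let t1 := turn3 d a b in let t2 := turn3 a b c in
  let t3 := turn3 b c d in let t4 := turn3 c d a in
  (0 < dot3 t1 t2 /\ 0 < dot3 t1 t3 /\ 0 < dot3 t1 t4 /\
   0 < dot3 t2 t3 /\ 0 < dot3 t2 t4 /\ 0 < dot3 t3 t4).

(* m x n nets, indexed by F i j for 0 <= i <= m, 0 <= j <= n *)
Definition is_net2 (m n : nat) (G : nat -> nat -> pt2 R) : Prop :=
  forall i j, (i < m)%N -> (j < n)%N ->
    convex_quad2 (G i j) (G i.+1 j) (G i.+1 j.+1) (G i j.+1).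

Definition is_net3 (m n : nat) (F : nat -> nat -> pt3 R) : Prop :=
  forall i j, (i < m)%N -> (j < n)%N ->
    convex_planar_quad3 (F i j) (F i.+1 j) (F i.+1 j.+1) (F i j.+1).

End Geo.

(* Main.v *)
Require Import Defs.
From HB Require Import structures.
From mathcomp Require Import all_boot all_order all_algebra.
From mathcomp Require Import ring lra zify.
Import Order.TTheory GRing.Theory Num.Theory.
Set Implicit Arguments. Unset Strict Implicit. Unset Printing Implicit Defensive.
Local Open Scope ring_scope.

Section Geo3.
Variable R : realFieldType.

Definition E4 (A B C D : pt3 R) : R := dot3 (cross3 (sub3 B A) (sub3 C A)) (sub3 D A).

Lemma conv_nz (a b c d : pt2 R) : convex_quad2 a b c d ->
  [/\ orient2 a b c != 0, orient2 b c d != 0, orient2 c d a != 0 & orient2 d a b != 0].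
Proof.
rewrite /convex_quad2 => -[[h1 [h2 [h3 h4]]]|[h1 [h2 [h3 h4]]]].
  by split; apply: lt0r_neq0.
by split; apply: ltr0_neq0.
Qed.

Lemma plane_ok (al be ga ax ay bx b_y cx cy dx dy : R) :
  convex_quad2 (ax,ay) (bx,b_y) (cx,cy) (dx,dy) ->
  convex_planar_quad3 (ax,ay,al*ax+be*ay+ga) (bx,b_y,al*bx+be*b_y+ga)
     (cx,cy,al*cx+be*cy+ga) (dx,dy,al*dx+be*dy+ga).
Proof.
move=> hc.
have tE : forall px py qx qy rx ry : R,
  turn3 (px,py,al*px+be*py+ga) (qx,qy,al*qx+be*qy+ga) (rx,ry,al*rx+be*ry+ga)
  = (- (al * orient2 (px,py) (qx,qy) (rx,ry)), - (be * orient2 (px,py) (qx,qy) (rx,ry)),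
       orient2 (px,py) (qx,qy) (rx,ry)).
  move=> px py qx qy rx ry; rewrite /turn3 /cross3 /sub3 /orient2 /=.
  congr (_, _, _); ring.
have dE : forall o1 o2 : R, dot3 (- (al * o1), - (be * o1), o1) (- (al * o2), - (be * o2), o2)
   = o1 * o2 * (1 + al ^+ 2 + be ^+ 2).
  move=> o1 o2; rewrite /dot3 /=; ring.
have sp : 0 < 1 + al ^+ 2 + be ^+ 2 by nra.
have pos : forall o1 o2 : R, ((0 < o1 /\ 0 < o2) \/ (o1 < 0 /\ o2 < 0)) ->
   0 < o1 * o2 * (1 + al ^+ 2 + be ^+ 2).
  move=> o1 o2 h; apply: mulr_gt0 => //; case: h => -[h1 h2]; nra.
split.
  rewrite /dot3 /cross3 /sub3 /=; ring.
rewrite /= !tE !dE.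
move: hc; rewrite /convex_quad2 => -[[h1 [h2 [h3 h4]]]|[h1 [h2 [h3 h4]]]];
  by repeat split; apply: pos; tauto.
Qed.

Lemma quad_ok (A B C D : pt3 R) : convex_quad2 (top A) (top B) (top C) (top D) ->
  E4 A B C D = 0 -> convex_planar_quad3 A B C D.
Proof.
case: A => [[ax ay] az]; case: B => [[bx b_y] bz]; case: C => [[cx cy] cz];
case: D => [[dx dy] dz]; rewrite /top /= => hc hE.
have [_ _ _ hnz] := conv_nz hc.
move: hnz; rewrite /orient2 /= => hnz.
pose o := (ax - dx) * (b_y - dy) - (ay - dy) * (bx - dx).
pose al := ((bz-az)*(dy-ay) - (dz-az)*(b_y-ay))/o.
pose be := ((bx-ax)*(dz-az) - (dx-ax)*(bz-az))/o.
pose ga := az - al*ax - be*ay.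
have hid : E4 (ax,ay,az) (bx,b_y,bz) (cx,cy,cz) (dx,dy,dz) = - o * (cz - (al*cx+be*cy+ga)).
  rewrite /ga /al /be /o /E4 /dot3 /cross3 /sub3 /=. field. exact: hnz.
have hA : az = al*ax+be*ay+ga by rewrite /ga; ring.
have hB : bz = al*bx+be*b_y+ga by rewrite /ga /al /be /o; field; exact: hnz.
have hD : dz = al*dx+be*dy+ga by rewrite /ga /al /be /o; field; exact: hnz.
have hC : cz = al*cx+be*cy+ga.
  move: hE; rewrite hid => /eqP; rewrite mulf_eq0 oppr_eq0 (negbTE hnz) /= subr_eq0.
  by move/eqP.
move: hc; rewrite hA hB hC hD; clear hid hA hB hC hD hE.
move: al be ga => al be ga hc.
exact: plane_ok.
Qed.

Lemma E4_affA (a b c d : pt2 R) (za zb zc zd : R) : convex_quad2 a b c d ->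
  exists2 s, s != 0 & forall t,
   E4 (a.1,a.2,t) (b.1,b.2,zb) (c.1,c.2,zc) (d.1,d.2,zd)
   = E4 (a.1,a.2,0) (b.1,b.2,zb) (c.1,c.2,zc) (d.1,d.2,zd) + s * t.
Proof.
move=> /conv_nz [h1 h2 h3 h4]; exists (- orient2 b c d); first by rewrite ?oppr_eq0.
move=> t; rewrite /E4 /orient2 /dot3 /cross3 /sub3 /=; ring.
Qed.

Lemma E4_affB (a b c d : pt2 R) (za zb zc zd : R) : convex_quad2 a b c d ->
  exists2 s, s != 0 & forall t,
   E4 (a.1,a.2,za) (b.1,b.2,t) (c.1,c.2,zc) (d.1,d.2,zd)
   = E4 (a.1,a.2,za) (b.1,b.2,0) (c.1,c.2,zc) (d.1,d.2,zd) + s * t.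
Proof.
move=> /conv_nz [h1 h2 h3 h4]; exists (orient2 c d a); first by rewrite ?oppr_eq0.
move=> t; rewrite /E4 /orient2 /dot3 /cross3 /sub3 /=; ring.
Qed.

Lemma E4_affC (a b c d : pt2 R) (za zb zc zd : R) : convex_quad2 a b c d ->
  exists2 s, s != 0 & forall t,
   E4 (a.1,a.2,za) (b.1,b.2,zb) (c.1,c.2,t) (d.1,d.2,zd)
   = E4 (a.1,a.2,za) (b.1,b.2,zb) (c.1,c.2,0) (d.1,d.2,zd) + s * t.
Proof.
move=> /conv_nz [h1 h2 h3 h4]; exists (- orient2 d a b); first by rewrite ?oppr_eq0.
move=> t; rewrite /E4 /orient2 /dot3 /cross3 /sub3 /=; ring.
Qed.

Lemma E4_affD (a b c d : pt2 R) (za zb zc zd : R) : convex_quad2 a b c d ->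
  exists2 s, s != 0 & forall t,
   E4 (a.1,a.2,za) (b.1,b.2,zb) (c.1,c.2,zc) (d.1,d.2,t)
   = E4 (a.1,a.2,za) (b.1,b.2,zb) (c.1,c.2,zc) (d.1,d.2,0) + s * t.
Proof.
move=> /conv_nz [h1 h2 h3 h4]; exists (orient2 a b c); first by rewrite ?oppr_eq0.
move=> t; rewrite /E4 /orient2 /dot3 /cross3 /sub3 /=; ring.
Qed.
End Geo3.
Section Net.
Variable R : realFieldType.
Variables (m n i0 j0 : nat) (G : nat -> nat -> pt2 R) (F0 : nat -> nat -> pt3 R).
Hypotheses (hG : is_net2 m n G) (hi0 : (i0 <= m)%N) (hj0 : (j0 <= n)%N).

Definition P (z : nat -> nat -> R) a b : pt3 R := ((G a b).1, (G a b).2, z a b).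
Definition Eqn z i j := E4 (P z i j) (P z i.+1 j) (P z i.+1 j.+1) (P z i j.+1).
Definition lo (c k : nat) := if (c < k)%N then k.-1 else k.
Definition dI (c k : nat) := ((k - c) + (c - k))%N.
Definition dist a b := (dI i0 a + dI j0 b)%N.
Definition upd (z : nat -> nat -> R) a b t := fun x y => if (x == a) && (y == b) then t else z x y.
Definition root (f : R -> R) := - f 0 / (f 1 - f 0).
Definition step z a b := if (a == i0) || (b == j0) then (F0 a b).2
  else root (fun t => Eqn (upd z a b t) (lo i0 a) (lo j0 b)).
Definition zk k := iter k (fun z a b => step z a b) (fun a b => (F0 a b).2).
Definition Z := zk (m + n).+1.

Lemma root_ok (f : R -> R) s : s != 0 -> (forall t, f t = f 0 + s * t) ->
  f (root f) = 0 /\ forall t, f t = 0 -> t = root f.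
Proof.
move=> hs hf; have h1 : f 1 - f 0 = s by rewrite hf mulr1 addrC addKr.
rewrite /root h1; split.
  by rewrite hf; field.
by move=> t; rewrite hf => /eqP; rewrite addr_eq0 => /eqP ->; field.
Qed.

Lemma lo_facts c a M : (c <= M)%N -> (a <= M)%N -> a != c ->
  (lo c a < M)%N /\ (a = lo c a \/ a = (lo c a).+1).
Proof. move=> h1 h2 /eqP h3; rewrite /lo; case: (ltnP c a) => h.
  split; [lia|right]. lia.
split; [lia|left; lia]. Qed.

Lemma corner_facts c a x M : (c <= M)%N -> (a <= M)%N -> a != c ->
  (x == lo c a) || (x == (lo c a).+1) ->
  [/\ (x <= M)%N, (dI c x <= dI c a)%N & (x != a -> (dI c x < dI c a)%N)].
Proof.
move=> h1 h2 /eqP h3; rewrite /lo /dI; case: (ltnP c a) => h /orP [] /eqP ->; split; try lia;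
  move=> /eqP; lia.
Qed.

Lemma far_exists c i M : (c <= M)%N -> (i < M)%N ->
  exists a, [/\ (a <= M)%N, a != c & lo c a = i].
Proof.
move=> h1 h2; case: (leqP c i) => h.
  exists i.+1; split; [lia| apply/eqP; lia | rewrite /lo; case: ifP => // hh; lia].
exists i; split; [lia| apply/eqP; lia | rewrite /lo; case: ifP => // hh; lia].
Qed.

Lemma aff z a b : (a <= m)%N -> (b <= n)%N -> a != i0 -> b != j0 ->
  exists2 s, s != 0 & forall t, Eqn (upd z a b t) (lo i0 a) (lo j0 b)
     = Eqn (upd z a b 0) (lo i0 a) (lo j0 b) + s * t.
Proof.
move=> ha hb na nb.
have [him hai] := lo_facts hi0 ha na.
have [hjn hbj] := lo_facts hj0 hb nb.
move: (lo i0 a) (lo j0 b) him hai hjn hbj => i j him hai hjn hbj.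
have hq := hG him hjn.
have n1 : (i == i.+1) = false := ltn_eqF (ltnSn i).
have n2 : (i.+1 == i) = false := gtn_eqF (ltnSn i).
have m1 : (j == j.+1) = false := ltn_eqF (ltnSn j).
have m2 : (j.+1 == j) = false := gtn_eqF (ltnSn j).
case: hai => ->; case: hbj => ->; rewrite /Eqn /P /upd !eqxx ?n1 ?n2 ?m1 ?m2 /=;
  first [exact: (E4_affA 0 _ _ _ hq) | exact: (E4_affB _ 0 _ _ hq)
        | exact: (E4_affC _ _ 0 _ hq) | exact: (E4_affD _ _ _ 0 hq)].
Qed.

Lemma f_ext z1 z2 a b : (a <= m)%N -> (b <= n)%N -> a != i0 -> b != j0 ->
  (forall x y, (x <= m)%N -> (y <= n)%N -> (dist x y < dist a b)%N -> z1 x y = z2 x y) ->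
  forall t, Eqn (upd z1 a b t) (lo i0 a) (lo j0 b) = Eqn (upd z2 a b t) (lo i0 a) (lo j0 b).
Proof.
move=> ha hb na nb h t.
have hc : forall x y, (x == lo i0 a) || (x == (lo i0 a).+1) ->
    (y == lo j0 b) || (y == (lo j0 b).+1) -> upd z1 a b t x y = upd z2 a b t x y.
  move=> x y hx hy; have [xm dx1 dx2] := corner_facts hi0 ha na hx.
  have [yn dy1 dy2] := corner_facts hj0 hb nb hy.
  rewrite /upd; case: ifP => // /negbT; rewrite negb_and => hne; apply: h => //.
  rewrite /dist; case/orP: hne => [/dx2|/dy2]; lia.
by rewrite /Eqn /P !hc ?eqxx ?orbT.
Qed.

Lemma step_ext z1 z2 a b : (a <= m)%N -> (b <= n)%N ->
  (forall x y, (x <= m)%N -> (y <= n)%N -> (dist x y < dist a b)%N -> z1 x y = z2 x y) ->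
  step z1 a b = step z2 a b.
Proof.
move=> ha hb h; rewrite /step; case: ifP => // /negbT /norP [na nb].
by rewrite /root !(f_ext ha hb na nb h).
Qed.

Lemma zkS k : zk k.+1 = (fun a b => step (zk k) a b).
Proof. by []. Qed.

Lemma stab k a b : (a <= m)%N -> (b <= n)%N -> (dist a b <= k)%N -> zk k.+1 a b = zk k a b.
Proof.
elim: k a b => [|k IH] a b ha hb hd.
  have ea : a = i0 by move: hd; rewrite /dist /dI; lia.
  by rewrite zkS /step ea eqxx.
rewrite zkS [in RHS]zkS; apply: step_ext => // x y hx hy hxy; apply: IH => //; lia.
Qed.

Lemma Zfix a b : (a <= m)%N -> (b <= n)%N -> Z a b = step Z a b.
Proof.
move=> ha hb; rewrite {1}/Z zkS; apply: step_ext => // x y hx hy _.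
rewrite /Z; symmetry; apply: stab => //; rewrite /dist /dI; lia.
Qed.

Lemma Zline a b : (a <= m)%N -> (b <= n)%N -> (a = i0 \/ b = j0) -> Z a b = (F0 a b).2.
Proof. move=> ha hb h; rewrite Zfix // /step; case: h => ->; by rewrite eqxx ?orbT. Qed.

Lemma Zeq i j : (i < m)%N -> (j < n)%N -> Eqn Z i j = 0.
Proof.
move=> hi hj.
have [a [ha na ea]] := far_exists hi0 hi.
have [b [hb nb eb]] := far_exists hj0 hj.
have [s hs hf] := aff Z ha hb na nb.
have [h0 _] := root_ok hs hf.
have us : forall x y, upd Z a b (Z a b) x y = Z x y.
  by move=> x y; rewrite /upd; case: ifP => // /andP [/eqP -> /eqP ->].
have -> : Eqn Z i j = Eqn (upd Z a b (Z a b)) (lo i0 a) (lo j0 b) by rewrite ea eb /Eqn /P !us.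
rewrite [Z a b](Zfix ha hb) /step (negbTE na) (negbTE nb) /=.
exact: h0.
Qed.

Lemma uniqZ (z' : nat -> nat -> R) :
  (forall i j, (i < m)%N -> (j < n)%N -> Eqn z' i j = 0) ->
  (forall a b, (a <= m)%N -> (b <= n)%N -> (a = i0 \/ b = j0) -> z' a b = (F0 a b).2) ->
  forall a b, (a <= m)%N -> (b <= n)%N -> z' a b = Z a b.
Proof.
move=> hE hL.
suff H : forall d a b, (dist a b <= d)%N -> (a <= m)%N -> (b <= n)%N -> z' a b = Z a b.
  by move=> a b; apply: H (leqnn _).
elim=> [|d IH] a b hd ha hb.
  have ea : a = i0 by move: hd; rewrite /dist /dI; lia.
  by rewrite hL ?Zline //; left.
case: (boolP ((a == i0) || (b == j0))) => [/orP hab | /norP [na nb]].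
  have hab' : a = i0 \/ b = j0 by case: hab => /eqP; tauto.
  by rewrite hL ?Zline.
have [s hs hf] := aff Z ha hb na nb.
have [_ hu] := root_ok hs hf.
rewrite (Zfix ha hb) /step (negbTE na) (negbTE nb) /=; apply: hu.
have [him _] := lo_facts hi0 ha na.
have [hjn _] := lo_facts hj0 hb nb.
rewrite -(f_ext (z1:=z') (z2:=Z) ha hb na nb); last first.
  by move=> x y hx hy hxy; apply: IH => //; lia.
have us : forall x y, upd z' a b (z' a b) x y = z' x y.
  by move=> x y; rewrite /upd; case: ifP => // /andP [/eqP -> /eqP ->].
by rewrite /Eqn /P !us; apply: hE.
Qed.
End Net.

Lemma topP (R : realFieldType) (G : nat -> nat -> pt2 R) z a b : top (P G z a b) = G a b.
Proof. by rewrite /top /P /=; case: (G a b). Qed.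

Theorem lemma10 (R : realFieldType) (m n i0 j0 : nat)
    (G : nat -> nat -> pt2 R) (F0 : nat -> nat -> pt3 R) :
  is_net2 m n G -> (i0 <= m)%N -> (j0 <= n)%N ->
  (forall i j, (i <= m)%N -> (j <= n)%N -> (i = i0 \/ j = j0) ->
     top (F0 i j) = G i j) ->
  exists F : nat -> nat -> pt3 R,
    [/\ is_net3 m n F,
        (forall i j, (i <= m)%N -> (j <= n)%N -> (i = i0 \/ j = j0) ->
           F i j = F0 i j),
        (forall i j, (i <= m)%N -> (j <= n)%N -> top (F i j) = G i j) &
        (forall F' : nat -> nat -> pt3 R,
           is_net3 m n F' ->
           (forall i j, (i <= m)%N -> (j <= n)%N -> (i = i0 \/ j = j0) ->
              F' i j = F0 i j) ->
           (forall i j, (i <= m)%N -> (j <= n)%N -> top (F' i j) = G i j) ->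
           forall i j, (i <= m)%N -> (j <= n)%N -> F' i j = F i j)].
Proof.
move=> hG hi0 hj0 hF0.
exists (P G (Z m n i0 j0 G F0)); split.
- move=> i j hi hj; apply: quad_ok; first by rewrite !topP; apply: hG.
  by apply: Zeq.
- move=> i j hi hj hl.
  have e1 := Zline G F0 hi0 hj0 hi hj hl.
  have e2 := hF0 i j hi hj hl.
  rewrite /P e1; move: e2; case: (F0 i j) => [[x y] w] /= <-.
  by [].
- by move=> i j _ _; rewrite topP.
move=> F' hN hL hT i j hi hj.
pose z' := fun x y => (F' x y).2.
have hP' : forall a b, (a <= m)%N -> (b <= n)%N -> F' a b = P G z' a b.
  move=> a b ha hb; have e := hT a b ha hb; rewrite /P /z'.
  by move: e; rewrite /top; case: (F' a b) => [[x y] w] /= <-.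
have hL' : forall a b, (a <= m)%N -> (b <= n)%N -> (a = i0 \/ b = j0) -> z' a b = (F0 a b).2.
  by move=> a b ha hb hab; rewrite /z' (hL a b ha hb hab).
clearbody z'.
have hE : forall i j, (i < m)%N -> (j < n)%N -> Eqn G z' i j = 0.
  move=> i' j' hi' hj'; have [h _] := hN i' j' hi' hj'; move: h.
  have hi1 := ltnW hi'; have hj1 := ltnW hj'.
  by rewrite !hP'.
rewrite hP' //; rewrite /P; congr (_, _, _).
exact: (uniqZ hG hi0 hj0 hE hL').
Qed.
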